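(* Let $\mathcal{H}$ be a reproducing kernel Hilbert space of real-valued functions on $\mathbb{R}^p$ with positive definite reproducing kernel $K:\mathbb{R}^p\times\mathbb{R}^p\to\mathbb{R}$ and norm $\|\cdot\|_{\mathcal{H}}$. Let training data $\{(y_i,\mathbf{x}_i)\}_{i=1}^N\subset\mathbb{R}\times\mathbb{R}^p$ be given, let $\mu\ge 0$, let $s\in\{1,\dots,N\}$, and let $\lambda_0\ge 0$. For $f\in\mathcal{H}$ set $r_i(f):=y_i-f(\mathbf{x}_i)$ and let $r_{[1]}^2(f)\le\dots\le r_{[N]}^2(f)$ denote the squared residuals $r_1^2(f),\dots,r_N^2(f)$ sorted in nondecreasing order. Suppose $(\hat f,\hat{\mathbf{o}})\in\mathcal{H}\times\mathbb{R}^N$ is a minimizer of $$\min_{f\in\mathcal{H},\ \mathbf{o}\in\mathbb{R}^N}\Big[\sum_{i=1}^N (y_i-f(\mathbf{x}_i)-o_i)^2+\mu\|f\|_{\mathcal{H}}^2+\lambda_0\|\mathbf{o}\|_0\Big],$$ where $\|\mathbf{o}\|_0$ is the number of nonzero entries of $\mathbf{o}=[o_1,\dots,o_N]'$, and suppose $\lambda_0$ is such that $\|\hat{\mathbf{o}}\|_0=N-s$. Then $\hat f$ is a minimizer of the variational least-trimmed squares problem $$\min_{f\in\mathcal{H}}\Big[\sum_{i=1}^{s} r_{[i]}^2(f)+\mu\|f\|_{\mathcal{H}}^2\Big].$$ *)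

(* Defs.v *)
From HB Require Import structures.
From mathcomp Require Import all_boot all_order all_algebra.
From mathcomp Require Import reals.
Set Implicit Arguments. Unset Strict Implicit. Unset Printing Implicit Defensive.
Import Order.TTheory GRing.Theory Num.Theory.
Local Open Scope ring_scope.

Definition fn (R : realType) (p : nat) := 'rV[R]_p -> R.

Definition fadd (R : realType) (p : nat) (f g : fn R p) : fn R p := fun z => f z + g z.
Definition fscale (R : realType) (p : nat) (a : R) (f : fn R p) : fn R p := fun z => a * f z.
Definition fsub (R : realType) (p : nat) (f g : fn R p) : fn R p := fun z => f z - g z.

Definition is_RKHS (R : realType) (p : nat) (H : fn R p -> Prop)
    (ip : fn R p -> fn R p -> R) (K : 'rV[R]_p -> 'rV[R]_p -> R) : Prop :=
  H (fun _ => 0) /\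
      (forall f g, H f -> H g -> H (fadd f g)) /\
      (forall a f, H f -> H (fscale a f)) /\
      (forall f g, H f -> H g -> ip f g = ip g f) /\
      (forall a f g h, H f -> H g -> H h ->
         ip (fadd (fscale a f) g) h = a * ip f h + ip g h) /\
      (forall f, H f -> 0 <= ip f f /\ (ip f f = 0 -> f = (fun _ => 0))) /\
      (forall u : nat -> fn R p, (forall n, H (u n)) ->
         (forall e : R, 0 < e -> exists M, forall m n, (M <= m)%N -> (M <= n)%N ->
            ip (fsub (u m) (u n)) (fsub (u m) (u n)) < e) ->
         exists f, H f /\ forall e : R, 0 < e -> exists M, forall n, (M <= n)%N ->
            ip (fsub (u n) f) (fsub (u n) f) < e) /\
      (forall x, H (fun z => K z x)) /\
      (forall f x, H f -> ip f (fun z => K z x) = f x).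

Definition pd_kernel (R : realType) (p : nat) (K : 'rV[R]_p -> 'rV[R]_p -> R) :=
  (forall a b, K a b = K b a) /\
  forall (n : nat) (c : 'I_n -> R) (z : 'I_n -> 'rV[R]_p),
    0 <= \sum_(i < n) \sum_(j < n) c i * c j * K (z i) (z j).

Definition l0norm (R : realType) (N : nat) (o : 'I_N -> R) : nat :=
  #|[set i : 'I_N | o i != 0]|.

Definition outlier_obj (R : realType) (p N : nat) (ip : fn R p -> fn R p -> R)
    (y : 'I_N -> R) (x : 'I_N -> 'rV[R]_p) (mu lam0 : R)
    (f : fn R p) (o : 'I_N -> R) : R :=
  \sum_(i < N) (y i - f (x i) - o i) ^+ 2 + mu * ip f f + lam0 * (l0norm o)%:R.

Definition trimmed_sum (R : realType) (p N : nat) (y : 'I_N -> R)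
    (x : 'I_N -> 'rV[R]_p) (s : nat) (f : fn R p) : R :=
  \sum_(v <- take s (sort <=%R [seq (y i - f (x i)) ^+ 2 | i <- enum 'I_N])) v.

Definition lts_obj (R : realType) (p N : nat) (ip : fn R p -> fn R p -> R)
    (y : 'I_N -> R) (x : 'I_N -> 'rV[R]_p) (mu : R) (s : nat) (f : fn R p) : R :=
  trimmed_sum y x s f + mu * ip f f.

(* Main.v *)
Require Import Defs.
From HB Require Import structures.
From mathcomp Require Import all_boot all_order all_algebra.
From mathcomp Require Import reals.
From mathcomp Require Import lra.
Import Order.TTheory GRing.Theory Num.Theory.
Local Open Scope ring_scope.

Section Trim.
Variables (R : realType) (N : nat) (g : 'I_N -> R).

Let l := sort (fun i j : 'I_N => g i <= g j) (enum 'I_N).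

Lemma trim_eq s : \sum_(v <- take s (sort <=%R [seq g i | i <- enum 'I_N])) v
   = \sum_(i in [set i in take s l]) g i.
Proof.
rewrite sort_map -map_take big_map big_uniq; last first.
  by apply: take_uniq; rewrite sort_uniq enum_uniq.
by apply: eq_bigl => i; rewrite inE.
Qed.

Lemma l_uniq : uniq l. Proof. by rewrite sort_uniq enum_uniq. Qed.
Lemma l_size : size l = N. Proof. by rewrite size_sort size_enum_ord. Qed.
Lemma l_mem i : i \in l. Proof. by rewrite mem_sort mem_enum. Qed.

Lemma card_B s : (s <= N)%N -> #|[set i in take s l]| = s.
Proof.
move=> hs; rewrite cardsE.
have /card_uniqP -> : uniq (take s l) by apply: take_uniq; exact: l_uniq.
by rewrite size_takel // l_size.
Qed.

Lemma trim_min s (A : {set 'I_N}) : (0 < s)%N -> #|A| = s ->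
  \sum_(v <- take s (sort <=%R [seq g i | i <- enum 'I_N])) v <= \sum_(i in A) g i.
Proof.
move=> s0 hA.
have sN : (s <= N)%N by rewrite -hA -[X in (_ <= X)%N]card_ord max_card.
have [i0 _] : exists i0 : 'I_N, true by exists (Ordinal (leq_trans s0 sN)).
rewrite trim_eq; set B := [set i in take s l].
have hB : #|B| = s by exact: card_B.
set t := g (nth i0 l s.-1).
have srt : sorted (fun i j : 'I_N => g i <= g j) l.
  by apply: sort_sorted => i j; exact: le_total.
have mono : forall a b, (a <= b)%N -> (b < N)%N -> g (nth i0 l a) <= g (nth i0 l b).
  move=> a b ab bN.
  have tr : transitive (fun i j : 'I_N => g i <= g j) by move=> ? ? ? ; exact: le_trans.
  have rf : reflexive (fun i j : 'I_N => g i <= g j) by move=> ?; exact: lexx.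
  have ha : a \in [pred n | (n < size l)%N] by rewrite inE l_size (leq_ltn_trans ab).
  have hb : b \in [pred n | (n < size l)%N] by rewrite inE l_size.
  exact: (sorted_leq_nth tr rf i0 srt a b ha hb ab).
have inB : forall i, (i \in B) = (index i l < s)%N.
  by move=> i; rewrite inE in_take // l_mem.
have Hin : forall i, i \in B -> g i <= t.
  move=> i; rewrite inB => h; rewrite -[X in g X <= _](nth_index i0 (l_mem i)).
  apply: mono; first by rewrite -ltnS (prednK s0).
  by apply: leq_trans sN; rewrite (prednK s0).
have Hout : forall i, i \notin B -> t <= g i.
  move=> i; rewrite inB -leqNgt => h; rewrite -[X in _ <= g X](nth_index i0 (l_mem i)).
  apply: mono; first by rewrite (leq_trans _ h) // leq_pred.
  by move: (l_mem i); rewrite -index_mem l_size.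
rewrite (big_setID (A:=B) A) (big_setID (A:=A) B) /= setIC.
apply: lerD => //.
apply: (@le_trans _ _ (t *+ #|B :\: A|)).
  rewrite -sumr_const; apply: ler_sum => i; rewrite inE => /andP[_ h]; exact: Hin.
have -> : #|B :\: A| = #|A :\: B| by rewrite !cardsD hA hB setIC.
rewrite -sumr_const; apply: ler_sum => i; rewrite inE => /andP[h _]; exact: Hout.
Qed.

End Trim.

Theorem proposition1 (R : realType) (p N : nat)
    (H : fn R p -> Prop) (ip : fn R p -> fn R p -> R)
    (K : 'rV[R]_p -> 'rV[R]_p -> R)
    (hH : is_RKHS H ip K) (hK : pd_kernel K)
    (y : 'I_N -> R) (x : 'I_N -> 'rV[R]_p)
    (mu : R) (hmu : 0 <= mu) (s : nat) (hs1 : (1 <= s)%N) (hsN : (s <= N)%N)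
    (lam0 : R) (hlam0 : 0 <= lam0)
    (fhat : fn R p) (ohat : 'I_N -> R) (hfhat : H fhat)
    (hmin : forall (f : fn R p) (o : 'I_N -> R), H f ->
        outlier_obj ip y x mu lam0 fhat ohat <= outlier_obj ip y x mu lam0 f o)
    (hl0 : l0norm ohat = (N - s)%N) :
  forall f : fn R p, H f -> lts_obj ip y x mu s fhat <= lts_obj ip y x mu s f.
Proof.
move=> f hf.
set c := lam0 * (N - s)%:R.
set S := [set i | ohat i != 0].
have hA : #|~: S| = s.
  rewrite cardsCs setCK card_ord.
  have -> : #|S| = l0norm ohat by [].
  by rewrite hl0 subKn.
have low : lts_obj ip y x mu s fhat + c <= outlier_obj ip y x mu lam0 fhat ohat.
  rewrite /lts_obj /outlier_obj /trimmed_sum hl0 -/c.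
  rewrite lerD2r lerD2r.
  have tm := @trim_min R N (fun i => (y i - fhat (x i)) ^+ 2) s _ hs1 hA. simpl in tm. apply: (le_trans tm).
  rewrite [X in _ <= X](bigID (mem (~: S))) /= -[X in X <= _]addr0; apply: lerD.
    apply: ler_sum => i; rewrite !inE negbK => /eqP ->; by rewrite subr0.
  by apply: sumr_ge0 => i _; exact: sqr_ge0.
set g := fun i => (y i - f (x i)) ^+ 2.
set l := sort (fun i j : 'I_N => g i <= g j) (enum 'I_N).
set B := [set i in take s l].
have hB : #|B| = s by exact: (@card_B R N g s hsN).
pose o := fun i => if i \in B then 0 else y i - f (x i).
have up : outlier_obj ip y x mu lam0 f o <= lts_obj ip y x mu s f + c.
  rewrite /lts_obj /outlier_obj /trimmed_sum -/g (@trim_eq R N g s) -/l -/B.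
  have -> : \sum_(i < N) (y i - f (x i) - o i) ^+ 2 = \sum_(i in B) g i.
    rewrite [RHS]big_mkcond /=; apply: eq_bigr => i _; rewrite /o /g.
    by case: (i \in B); rewrite ?subr0 ?subrr ?expr0n.
  rewrite lerD2l /c; apply: ler_wpM2l => //; rewrite ler_nat.
  have -> : (N - s)%N = #|~: B| by rewrite cardsCs setCK card_ord hB.
  apply: subset_leq_card; apply/subsetP => i; rewrite !inE /o.
  by case: ifP => [_|]; [rewrite eqxx | rewrite inE => ->].
have := hmin f o hf.
move: low up; set a := lts_obj _ _ _ _ _ fhat; set b := lts_obj _ _ _ _ _ f.
move=> h1 h2 h3.
have := le_trans h1 (le_trans h3 h2).
by rewrite lerD2r.
Qed.
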